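(* Let $M'=M[D,K]$ be a compatible minor of the weighted uncertainty matroid $\mathcal{M}$. Let $e$ be a non-trivial element of $M'$ such that (i) there exists a circuit $C$ of $M'$ with $e\in C$, (ii) $w_e=L_e$, (iii) $e$ has maximum weight in $C$, and (iv) $e$ has maximum query cost in $C\cap E^L_{w_e}$. Then $M[D\cup\{e\},K]$ is a compatible minor of $\mathcal{M}$.
   Context: A weighted uncertainty matroid $\mathcal{M}=(E,\mathcal{I},A,w)$ consists of a matroid $M=(E,\mathcal{I})$ on a finite set $E$, for each $e\in E$ a non-empty finite union $A_e$ of bounded real intervals (each open or closed), a weight $w_e\in A_e$, and a query cost $c_e\ge0$. $L_e=\inf A_e$, $U_e=\sup A_e$; $e$ is trivial if $A_e=\{w_e\}$. For a real $x$, $E^L_x=\{e\in E: L_e=x \text{ and } e \text{ non-trivial}\}$. A minimum-weight basis (MWB) is a basis minimizing total weight. A weight assignment is $w^*$ with $w^*_e\in A_e$, consistent with $Q$ if $w^*_e=w_e$ on $Q$. $Q$ verifies an MWB $B$ if for every weight assignment consistent with $Q$, $B$ is an MWB with respect to it; a certificate for $\mathcal{M}$ is a set verifying some MWB, and $c^*$ denotes the minimum cost $\sum_{e\in Q}c_e$ of a certificate for $\mathcal{M}$. For $D,K\subseteq E$, $M[D,K]$ is the matroid obtained from $M$ by deleting $D$ and contracting $K$, ground set $E\setminus(D\cup K)$, weights restricted. $M[D,K]$ is a compatible minor if there is a set $Q$ of cost $c^*$ verifying an MWB $B$ of $\mathcal{M}$ with $K\subseteq B$, $D\cap B=\emptyset$.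 *)

(* Defs.v *)
From HB Require Import structures.
From mathcomp Require Import all_boot all_order all_algebra.
From mathcomp Require Import reals.
Set Implicit Arguments. Unset Strict Implicit. Unset Printing Implicit Defensive.
Import Order.TTheory GRing.Theory Num.Theory.
Local Open Scope ring_scope.

Section Defs.
Variables (E : finType) (R : realType).

(* An uncertainty area: finite union of bounded intervals; each interval is
   (l, u, closed) meaning [l,u] if closed = true and (l,u) otherwise. *)
Definition itv_mem (x : R) (i : R * R * bool) : bool :=
  let: (l, u, cl) := i in if cl then (l <= x <= u) else (l < x < u).
Definition in_A (a : seq (R * R * bool)) (x : R) : bool := has (itv_mem x) a.

Record wum := WUM {
  indep : {set E} -> bool;
  A : E -> seq (R * R * bool);
  w : E -> R;
  c : E -> R;
  indep0 : indep set0;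
  indep_sub : forall X Y : {set E}, Y \subset X -> indep X -> indep Y;
  indep_exch : forall X Y : {set E}, indep X -> indep Y -> (#|X| < #|Y|)%N ->
      exists2 y, y \in Y :\: X & indep (y |: X);
  w_in : forall e, in_A (A e) (w e);
  c_ge0 : forall e, 0 <= c e
}.

Variable M : wum.

Definition Lb (e : E) : R := reals.inf (fun x : R => in_A (A M e) x : Prop).
Definition trivial (e : E) : Prop := forall x, in_A (A M e) x <-> x = w M e.
Definition EL (x : R) (e : E) : Prop := Lb e = x /\ ~ trivial e.

Definition is_basis (B : {set E}) : Prop :=
  indep M B /\ forall X : {set E}, indep M X -> B \subset X -> X = B.
Definition wsum (w' : E -> R) (X : {set E}) : R := \sum_(e in X) w' e.
Definition is_MWB (w' : E -> R) (B : {set E}) : Prop :=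
  is_basis B /\ forall B' : {set E}, is_basis B' -> wsum w' B <= wsum w' B'.
Definition assignment (w' : E -> R) : Prop := forall e, in_A (A M e) (w' e).
Definition consistent (Q : {set E}) (w' : E -> R) : Prop :=
  forall e, e \in Q -> w' e = w M e.
Definition verifies (Q B : {set E}) : Prop :=
  forall w', assignment w' -> consistent Q w' -> is_MWB w' B.
Definition certificate (Q : {set E}) : Prop := exists B, verifies Q B.
Definition cost (Q : {set E}) : R := \sum_(e in Q) c M e.

Definition minor_indep (D K X : {set E}) : Prop :=
  X \subset ~: (D :|: K) /\
  exists J : {set E}, [/\ J \subset K, indep M J,
     (forall J' : {set E}, J' \subset K -> indep M J' -> J \subset J' -> J' = J) &
     indep M (X :|: J)].
Definition minor_circuit (D K C : {set E}) : Prop :=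
  [/\ C \subset ~: (D :|: K), ~ minor_indep D K C &
      forall C' : {set E}, C' \proper C -> minor_indep D K C'].

Definition compatible_minor (D K : {set E}) : Prop :=
  exists Q B, [/\ verifies Q B,
    (forall Q' : {set E}, certificate Q' -> cost Q <= cost Q'),
    K \subset B & [disjoint D & B]].
End Defs.

(* Main.v *)
Require Import Defs.
From HB Require Import structures.
From mathcomp Require Import all_boot all_order all_algebra.
From mathcomp Require Import reals.
From Stdlib Require Import Classical.
From mathcomp Require Import lra.
Import Order.TTheory GRing.Theory Num.Theory.
Local Open Scope ring_scope.
Set Implicit Arguments.

Section Aux.
Variables (R : realType) (E : finType) (M : wum E R).

Lemma inA_lb (a : seq (R * R * bool)) : exists lb, forall x, in_A a x -> lb <= x.
Proof.
elim: a => [|[[l u] cl] a [lb Hlb]]; first by exists 0.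
exists (Num.min l lb) => x /=; rewrite /in_A /= => /orP [].
  case: cl => /andP [H1 _]; rewrite ge_min ?H1 //; by rewrite ltW.
by move=> /Hlb H; rewrite ge_min H orbT.
Qed.

Lemma Lb_le g x : in_A (A M g) x -> Lb M g <= x.
Proof.
move=> Hx; have [lb Hlb] := inA_lb (A M g).
apply: (@ge_inf R (fun x : R => in_A (A M g) x : Prop)) => //.
by exists lb => y Hy; apply: Hlb.
Qed.

Lemma Lb_eq g y : in_A (A M g) y -> (forall x, in_A (A M g) x -> y <= x) -> Lb M g = y.
Proof.
move=> Hy Hmin; apply/eqP; rewrite eq_le; apply/andP; split.
  exact: Lb_le.
apply: lb_le_inf; first by exists y.
by move=> x Hx; apply: Hmin.
Qed.

Lemma nontriv_gt g : ~ trivial M g -> w M g = Lb M g ->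
  exists2 x, in_A (A M g) x & w M g < x.
Proof.
move=> Hnt Hw.
have [x Hx] : exists x, ~ (in_A (A M g) x <-> x = w M g).
  apply: not_all_ex_not => H; apply: Hnt => y; exact: H.
case Hin: (in_A (A M g) x).
  exists x => //; rewrite lt_def Hw Lb_le // andbT.
  apply/negP => /eqP Hxe; rewrite -Hw in Hxe; apply: Hx; split=> // _.
exfalso; apply: Hx; split => [Hxw|Hxw]; first by rewrite Hin in Hxw.
by rewrite Hxw; apply: w_in.
Qed.
Lemma basis_of_card {B X : {set E}} : is_basis M B -> indep M X -> (#|B| <= #|X|)%N -> is_basis M X.
Proof.
move=> [HB Bmax] HX Hc; split => // Y HY HXY.
apply/eqP; rewrite eqEsubset HXY andbT; apply/negP => HYX0.
have HYX : ~~ (Y \subset X) by apply/negP.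
have Hp : X \proper Y by rewrite properE HXY HYX.
have := proper_card Hp => HXYc.
have [y] := indep_exch HB HY (leq_ltn_trans Hc HXYc).
rewrite inE => /andP [HyB HyY] Hind.
have := Bmax _ Hind (subsetUr _ _) => HyB'.
by move: HyB; rewrite -HyB' in_setU1 eqxx.
Qed.

Lemma circ_exch (B K C : {set E}) (e : E) : is_basis M B -> K \subset B -> e \in B -> e \notin K ->
  indep M ((C :\ e) :|: K) -> ~ indep M (C :|: K) ->
  exists f, [/\ f \in C, f != e, f \notin B & is_basis M (f |: (B :\ e))].
Proof.
move=> hB hKB heB heK hS hCK.
set S := (C :\ e) :|: K.
pose P (Z : {set E}) := [&& indep M Z, S \subset Z & Z \subset S :|: B].
have PS : P S by rewrite /P hS subxx subsetUl.
case: (@arg_maxnP _ S P (fun Z : {set E} => #|Z|) PS) => Z /and3P [hZ hSZ hZSB] Zmax.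
have hBZ : (#|B| <= #|Z|)%N.
  rewrite leqNgt; apply/negP => hlt.
  have [y] := indep_exch hZ hB.1 hlt.
  rewrite inE => /andP [hyZ hyB] hind.
  have : P (y |: Z).
    rewrite /P hind (subset_trans hSZ (subsetUr _ _)) /=.
    by rewrite subUset sub1set inE hyB orbT hZSB.
  move/Zmax; by rewrite cardsU1 hyZ add1n /= ltnn.
have heZ : e \notin Z.
  apply/negP => heZ; apply: hCK; apply: (indep_sub _ hZ).
  rewrite subUset; apply/andP; split; last first.
    exact: subset_trans (subsetUr _ _) hSZ.
  apply/subsetP => x hx; case: (eqVneq x e) => [->//|hxe].
  by apply: (subsetP hSZ); rewrite !inE hxe hx.
have hlt2 : (#|B :\ e| < #|Z|)%N.
  by apply: leq_trans hBZ; rewrite (cardsD1 e B) heB.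
have [y] := indep_exch (indep_sub (subD1set B e) hB.1) hZ hlt2.
rewrite inE => /andP [hyBe hyZ] hind.
have hye : y != e by apply/eqP => hye; move: heZ; rewrite -hye hyZ.
have hyB : y \notin B by move: hyBe; rewrite !inE hye.
have hyC : y \in C.
  have := subsetP hZSB _ hyZ; rewrite !inE (negbTE hye) (negbTE hyB) /= orbF.
  case/orP => // hyK; by move: hyB; rewrite (subsetP hKB _ hyK).
exists y; split => //.
apply: (basis_of_card hB hind).
by rewrite cardsU1 hyBe (cardsD1 e B) heB.
Qed.

Lemma wsum_swap (w' : E -> R) (B : {set E}) e f : e \in B -> f \notin B ->
  wsum w' (f |: (B :\ e)) + w' e = wsum w' B + w' f.
Proof.
move=> heB hfB; rewrite /wsum big_setU1 /=; last by rewrite !inE negb_and hfB orbT.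
rewrite (big_setD1 e heB) /=; lra.
Qed.

End Aux.

Arguments wsum_swap {R E} w' {B e f}.
Theorem lemma18 (R : realType) (E : finType) (M : wum E R)
    (D K C : {set E}) (e : E) :
  compatible_minor M D K ->
  e \in ~: (D :|: K) -> ~ trivial M e ->
  minor_circuit M D K C -> e \in C ->
  w M e = Lb M e ->
  (forall f, f \in C -> w M f <= w M e) ->
  (forall f, f \in C -> EL M (w M e) f -> c M f <= c M e) ->
  compatible_minor M (e |: D) K.
Proof.
move=> [Q [B [hver hmin hKB hDB]]] heDK hnte [hCsub hnotC hprop] heC hwe hwmax hcmax.
have hBb : is_basis M B by have [] := hver (w M) (@w_in _ _ M) (fun _ _ => erefl).
have hMWB : forall w', assignment M w' -> consistent M Q w' -> is_MWB M w' B by [].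
case heB: (e \in B); last first.
  exists Q, B; split => //.
  rewrite -setI_eq0; apply/eqP/setP => x; rewrite !inE.
  apply/negP => /andP [/orP [/eqP ->|hxD] hxB]; first by rewrite heB in hxB.
  by move: hDB; rewrite -setI_eq0 => /eqP/setP/(_ x); rewrite !inE hxD hxB.
have heK : e \notin K by move: heDK; rewrite !inE negb_or => /andP [_].
have hK : indep M K := indep_sub hKB hBb.1.
have hCe : indep M ((C :\ e) :|: K).
  have [_ [J [hJK hJ Jmax hCJ]]] := hprop _ (properD1 heC).
  by have -> := Jmax K (subxx _) hK hJK.
have hCK : ~ indep M (C :|: K).
  move=> hind; apply: hnotC; split => //; exists K; split => //.
  by move=> J' hJ' _ hKJ'; apply/eqP; rewrite eqEsubset hJ' hKJ'.
have [f [hfC hfe hfB hB']] := circ_exch C hBb hKB heB heK hCe hCK.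
set B' := f |: (B :\ e).
have hfDK : f \in ~: (D :|: K) := subsetP hCsub _ hfC.
have hsw := fun w' : E -> R => wsum_swap w' heB hfB.
have hwf : w M f = w M e.
  apply/eqP; rewrite eq_le hwmax //=.
  have := (hMWB _ (@w_in _ _ M) (fun _ _ => erefl)).2 _ hB'.
  have := hsw (w M); lra.
have heQ : e \in Q.
  apply/negPn/negP => heQ.
  have [x hx hxgt] := nontriv_gt hnte hwe.
  pose w' := fun g => if g == e then x else w M g.
  have hass : assignment M w' by move=> g; rewrite /w'; case: eqP => [->|_] //; apply: w_in.
  have hcons : consistent M Q w' by move=> g hg; rewrite /w'; case: eqP => // hge; move: hg; rewrite hge (negbTE heQ).
  have := (hMWB _ hass hcons).2 _ hB'.
  have := hsw w'; rewrite /w' eqxx (negbTE hfe) hwf; lra.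
have hB'prop : K \subset B' /\ [disjoint e |: D & B'].
  split.
    apply/subsetP => x hx; rewrite !inE (subsetP hKB _ hx) andbT orbC.
    by apply/orP; left; apply/eqP => hxe; move: heK; rewrite -hxe hx.
  rewrite -setI_eq0; apply/eqP/setP => x; rewrite !inE.
  apply/negP => /andP [/orP [/eqP ->|hxD] /orP [/eqP hxf|/andP [hxe hxB]]].
  - by move: hfe; rewrite hxf eqxx.
  - by move: hxe; rewrite eqxx.
  - by move: hfDK; rewrite !inE -hxf hxD.
  - by move: hDB; rewrite -setI_eq0 => /eqP/setP/(_ x); rewrite !inE hxD hxB.
case: hB'prop => hKB' hDB'.
have htriv : f \in Q \/ trivial M f \/ (f \notin Q /\ ~ trivial M f).
  case hfQ: (f \in Q); first by left.
  by right; case: (classic (trivial M f)) => h; [left|right].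
case: htriv => [hfQ|[hft|[hfQ hnt]]].
- exists Q, B'; split => // w' hass hcons; split => // B'' hB''.
  have := (hMWB _ hass hcons).2 _ hB''.
  have := hsw w'; rewrite (hcons _ heQ) (hcons _ hfQ) hwf; lra.
- exists Q, B'; split => // w' hass hcons; split => // B'' hB''.
  have := (hMWB _ hass hcons).2 _ hB''.
  have hwf' : w' f = w M f by apply/hft.
  have := hsw w'; rewrite (hcons _ heQ) hwf' hwf; lra.
- (* swap e for f in Q *)
  have hELf : EL M (w M e) f.
    split => //; rewrite -hwf; apply: Lb_eq; first exact: w_in.
    move=> x hx; pose w' := fun g => if g == f then x else w M g.
    have hass : assignment M w' by move=> g; rewrite /w'; case: eqP => [->|_] //; apply: w_in.
    have hcons : consistent M Q w' by move=> g hg; rewrite /w'; case: eqP => // hge; move: hg; rewrite hge (negbTE hfQ).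
    have := (hMWB _ hass hcons).2 _ hB'.
    have := hsw w'; rewrite /w' eqxx eq_sym (negbTE hfe) hwf; lra.
  have hcf := hcmax _ hfC hELf.
  exists (f |: (Q :\ e)), B'; split => //.
  + move=> w' hass hcons; split => // B'' hB''.
    pose w'' := fun g => if g == e then w M e else w' g.
    have hass'' : assignment M w'' by move=> g; rewrite /w''; case: eqP => [->|_] //; apply: w_in.
    have hcons'' : consistent M Q w''.
      move=> g hg; rewrite /w''; case: eqP => [->//|/eqP hge].
      by apply: hcons; rewrite !inE hge hg orbT.
    have h1 := (hMWB _ hass'' hcons'').2 _ hB''.
    have h2 : wsum w'' B'' <= wsum w' B''.
      rewrite /wsum; apply: ler_sum => g _; rewrite /w''; case: eqP => [->|_] //.
      by rewrite hwe; apply: Lb_le.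
    have h3 : wsum w' B' = wsum w'' B'.
      rewrite /wsum; apply: eq_bigr => g hg; rewrite /w''; case: eqP => // hge.
      move: hg; rewrite hge !inE eqxx /= orbF => /eqP hfe2; by move: hfe; rewrite hfe2 eqxx.
    have := hsw w''; rewrite /w'' eqxx (negbTE hfe) (hcons f) ?inE ?eqxx // hwf.
    lra.
  + move=> Q' hQ'; apply: le_trans (hmin _ hQ').
    rewrite /cost big_setU1 /=; last by rewrite !inE negb_and hfQ orbT.
    rewrite [X in _ <= X](big_setD1 e heQ) /=; lra.
Qed.
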